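(* Let $P=\frac{1}{\sqrt2}\begin{bmatrix}1&1\\0&0\end{bmatrix}$, $Q=\frac{1}{\sqrt2}\begin{bmatrix}0&0\\1&-1\end{bmatrix}$ and $J=\begin{bmatrix}0&-1\\1&0\end{bmatrix}$. For an initial state $\varphi\in\mathbb{C}^2$ with $\|\varphi\|=1$, define $\Psi^{(n)}_k(\varphi)\in\mathbb{C}^2$ for $n\in\mathbb{Z}_+=\{0,1,2,\dots\}$ and $k\in\mathbb{Z}$ by $\Psi^{(0)}_0(\varphi)=\varphi$, $\Psi^{(0)}_k(\varphi)=0$ for $k\neq 0$, and $\Psi^{(n+1)}_k(\varphi)=Q\Psi^{(n)}_{k-1}(\varphi)+P\Psi^{(n)}_{k+1}(\varphi)$. (i) If $\varphi=\frac{e^{i\theta}}{\sqrt2}\begin{bmatrix}1\\ i\end{bmatrix}$ with $\theta\in[0,2\pi)$, then $\Psi^{(n)}_k(\varphi)=(-1)^n\, i\, J\,\Psi^{(n)}_{-k}(\varphi)$ for all $k\in\mathbb{Z}$ and $n\in\mathbb{Z}_+$. (ii) If $\varphi=\frac{e^{i\theta}}{\sqrt2}\begin{bmatrix}1\\ -i\end{bmatrix}$ with $\theta\in[0,2\pi)$, then $\Psi^{(n)}_k(\varphi)=(-1)^n\,(-i)\, J\,\Psi^{(n)}_{-k}(\varphi)$ for all $k\in\mathbb{Z}$ and $n\in\mathbb{Z}_+$.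
   Context: This is the one-dimensional Hadamard walk: $H=\frac{1}{\sqrt2}\begin{bmatrix}1&1\\1&-1\end{bmatrix}=P+Q$, the upper (resp. lower) component of $\Psi^{(n)}_k(\varphi)$ is the amplitude of the particle at site $k$ at time $n$ with left (resp. right) chirality. The paper realizes the walk on a large cycle of $2N+1$ sites with the particle started at the middle site; for the times considered this coincides with the walk on $\mathbb{Z}$ described in the claim. *)

(* Defs.v *)
From HB Require Import structures.
From mathcomp Require Import all_boot all_order all_algebra.
From mathcomp Require Import complex.
From mathcomp Require Import reals trigo.
Set Implicit Arguments. Unset Strict Implicit. Unset Printing Implicit Defensive.
Import Order.TTheory GRing.Theory Num.Theory.
Local Open Scope ring_scope.
Local Open Scope complex_scope.

Section Walk.
Variable R : realType.

Definition mx2 (a b c d : R[i]) : 'M[R[i]]_2 :=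
  \matrix_(i < 2, j < 2)
    if (i : nat) == 0%N then (if (j : nat) == 0%N then a else b)
    else (if (j : nat) == 0%N then c else d).

Definition cv2 (a b : R[i]) : 'cV[R[i]]_2 :=
  \col_(i < 2) if (i : nat) == 0%N then a else b.

Definition invsqrt2 : R[i] := ((Num.sqrt (2 : R))^-1)%:C.

Definition Pmx : 'M[R[i]]_2 := invsqrt2 *: mx2 1 1 0 0.
Definition Qmx : 'M[R[i]]_2 := invsqrt2 *: mx2 0 0 1 (-1).
Definition Jmx : 'M[R[i]]_2 := mx2 0 (-1) 1 0.

Definition expi (theta : R) : R[i] := (cos theta +i* sin theta).

Fixpoint Psi (phi : 'cV[R[i]]_2) (n : nat) (k : int) : 'cV[R[i]]_2 :=
  match n with
  | 0%N => if k == 0 then phi else 0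
  | n'.+1 => Qmx *m Psi phi n' (k - 1) + Pmx *m Psi phi n' (k + 1)
  end.

End Walk.

(* Main.v *)
Require Import Defs.
From HB Require Import structures.
From mathcomp Require Import all_boot all_order all_algebra.
From mathcomp Require Import complex.
From mathcomp Require Import reals trigo ring.
Import Order.TTheory GRing.Theory Num.Theory.
Local Open Scope ring_scope.
Local Open Scope complex_scope.

Section S.
Variable R : realType.

Lemma QJ : Qmx R *m Jmx R = - (Jmx R *m Pmx R).
Proof.
rewrite /Qmx /Pmx -scalemxAl -scalemxAr -scalerN; congr (_ *: _).
apply/matrixP=> i j; rewrite !mxE !big_ord_recl !big_ord0 !mxE.
case: i => [[|[|i]] Hi]; last by exfalso; move: Hi; rewrite !ltnS ltn0.
all: case: j => [[|[|j]] Hj]; last (by exfalso; move: Hj; rewrite !ltnS ltn0).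
all: rewrite /=; ring.
Qed.

Lemma PJ : Pmx R *m Jmx R = - (Jmx R *m Qmx R).
Proof.
rewrite /Qmx /Pmx -scalemxAl -scalemxAr -scalerN; congr (_ *: _).
apply/matrixP=> i j; rewrite !mxE !big_ord_recl !big_ord0 !mxE.
case: i => [[|[|i]] Hi]; last by exfalso; move: Hi; rewrite !ltnS ltn0.
all: case: j => [[|[|j]] Hj]; last (by exfalso; move: Hj; rewrite !ltnS ltn0).
all: rewrite /=; ring.
Qed.

Lemma gen (phi : 'cV[R[i]]_2) (c : R[i]) : phi = c *: (Jmx R *m phi) ->
  forall n k, Psi phi n k = ((-1) ^+ n * c) *: (Jmx R *m Psi phi n (- k)).
Proof.
move=> Hphi; elim=> [|n IH] k.
  rewrite /= oppr_eq0; case: eqP => _; first by rewrite expr0 mul1r.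
  by rewrite mulmx0 scaler0.
rewrite [LHS]/= [Psi _ _.+1 _]/=.
rewrite (IH (k - 1)) (IH (k + 1)) opprB opprD (addrC 1 (- k)).
rewrite -!scalemxAr !mulmxA QJ PJ !mulNmx -!mulmxA mulmxDr scalerDr addrC.
rewrite exprS -mulrA mulN1r !scaleNr -!scalerN.
exact: addrC.
Qed.

Lemma ii : 'i * 'i = -1 :> R[i].
Proof. by rewrite -expr2 sqr_i. Qed.

Lemma fix1 (e : R[i]) (s : R[i]) (Hs : s * s = -1) :
  e *: cv2 1 s = s *: (Jmx R *m (e *: cv2 1 s)).
Proof.
apply/matrixP=> i j; rewrite !mxE !big_ord_recl !big_ord0 !mxE.
case: j => [[|j] Hj]; last by exfalso; move: Hj; rewrite ltnS ltn0.
case: i => [[|[|i]] Hi]; last by exfalso; move: Hi; rewrite !ltnS ltn0.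
all: rewrite /= !(mul0r,add0r,addr0,mulN1r,mul1r,mulr1,mulrN,mulr0).
  by rewrite mulrCA Hs mulrN1 opprK.
exact: mulrC.
Qed.


End S.

Theorem lemma1 (R : realType) (theta : R) :
  0 <= theta < 2 * pi ->
  (let phi := (expi theta * invsqrt2 R) *: cv2 1 'i in
   forall (n : nat) (k : int),
     Psi phi n k = ((-1) ^+ n * 'i) *: (Jmx R *m Psi phi n (- k))) /\
  (let phi := (expi theta * invsqrt2 R) *: cv2 1 (- 'i) in
   forall (n : nat) (k : int),
     Psi phi n k = ((-1) ^+ n * (- 'i)) *: (Jmx R *m Psi phi n (- k))).
Proof.
move=> _; split => phi; apply: gen; apply: fix1.
  exact: ii.
by rewrite mulrNN ii.
Qed.
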